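(* (i) The map $m\mapsto\dfrac{N(m,m)}{G(m)D(m,m)}$ is decreasing on $(0,\overline x]$. (ii) For every $m\in(0,\overline x]$, the map $x\mapsto\dfrac{N(x,m)}{G(x)D(x,m)}$ is decreasing on $[m,\eta(m)]$.
   Context: $\mathcal I=(\alpha,\infty)$, $-\infty\le\alpha<0$; $\mu,\sigma:\mathcal I\to\mathbb R$ Lipschitz with $\sigma>0$, $\alpha,+\infty$ natural boundaries of $dX_t=\mu(X_t)dt+\sigma(X_t)dB_t$; $r>0$; $U:[0,\infty)\to[0,\infty)$. Assumptions: (a) $\mu,\sigma$ are $C^1$ with Lipschitz derivatives, $\mu(0)>rU(0)$, $\sup_{x\ge0}\mu'(x)<r$; (b) $U$ is nondecreasing, concave, $C^2$ on $[0,\infty)$, and for some $u^*\ge0$: $U'\ge1$ on $[0,u^*]$, $U'=1$ on $[u^*,\infty)$, $\mu U'+\frac12\sigma^2U''-rU>0$ on $[0,u^* )$; (c) $\mu$ is twice differentiable with $\mu''\le0$ on $[0,\infty)$. Notation. $\overline x>0$ is the unique point with $\mu-rU>0$ on $[0,\overline x)$ and $\mu-rU<0$ on $(\overline x,\infty)$. $\psi,\phi$ are the positive increasing and decreasing solutions of $\frac12\sigma^2(x)u''+\mu(x)u'-ru=0$. $D(x,m)=\psi'(x)\phi(m)-\phi'(x)\psi(m)$, $N(x,m)=\phi(x)\psi(m)-\psi(x)\phi(m)+D(x,m)\frac{\mu(x)}{r}-D(x,x)U(m)$, $G(x)=1-\mu'(x)/r$. It is known that for every $m\in[0,\overline x]$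 the equation $N(x,m)=0$ has a unique solution $x=\eta(m)\ge0$, with $\eta(m)\ge m$, $N(x,m)>0$ for $x<\eta(m)$ and $N(x,m)<0$ for $x>\eta(m)$. *)

(* Defs.v *)
From Stdlib Require Import Reals.
From Coquelicot Require Import Coquelicot.
Open Scope R_scope.

Definition inI (alpha : Rbar) (x : R) : Prop := Rbar_lt alpha x.

Definition lipschitz_on (P : R -> Prop) (f : R -> R) : Prop :=
  exists L : R, forall x y, P x -> P y -> Rabs (f x - f y) <= L * Rabs (x - y).

(* Scale density (reference point 0, which lies in I since alpha < 0)
   and speed density of dX = mu(X) dt + sigma(X) dB. *)
Definition scale_dens (mu sigma : R -> R) (x : R) : R :=
  exp (- RInt (fun y => 2 * mu y / (sigma y) ^ 2) 0 x).
Definition speed_dens (mu sigma : R -> R) (x : R) : R :=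
  2 / ((sigma x) ^ 2 * scale_dens mu sigma x).

(* Feller's classification: a boundary b is natural iff
     Sigma(b) = int_c^b (int_c^y m) s(y) dy = +oo  and
     N(b)     = int_c^b (int_c^y s) m(y) dy = +oo.
   The integrands are nonnegative and continuous, so "= +oo" is
   expressed as unboundedness of the partial integrals. *)
Definition natural_right (mu sigma : R -> R) : Prop :=
  (forall B : R, exists t, 0 <= t /\
     B < RInt (fun y => RInt (speed_dens mu sigma) 0 y * scale_dens mu sigma y) 0 t) /\
  (forall B : R, exists t, 0 <= t /\
     B < RInt (fun y => RInt (scale_dens mu sigma) 0 y * speed_dens mu sigma y) 0 t).

Definition natural_left (alpha : Rbar) (mu sigma : R -> R) : Prop :=
  (forall B : R, exists a, Rbar_lt alpha a /\ a <= 0 /\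
     B < RInt (fun y => RInt (speed_dens mu sigma) y 0 * scale_dens mu sigma y) a 0) /\
  (forall B : R, exists a, Rbar_lt alpha a /\ a <= 0 /\
     B < RInt (fun y => RInt (scale_dens mu sigma) y 0 * speed_dens mu sigma y) a 0).

(* One-sided (within [0,+oo)) derivative and continuity, for functions
   defined on [0,+oo) only (the utility U). *)
Definition is_derive_nonneg (f f' : R -> R) : Prop :=
  forall x, 0 <= x ->
    filterlim (fun h => (f (x + h) - f x) / h)
      (within (fun h => h <> 0 /\ 0 <= x + h) (locally 0)) (locally (f' x)).
Definition continuous_nonneg (f : R -> R) : Prop :=
  forall x, 0 <= x ->
    filterlim f (within (fun y => 0 <= y) (locally x)) (locally (f x)).

Definition C2_nonneg (U U1 U2 : R -> R) : Prop :=
  is_derive_nonneg U U1 /\ is_derive_nonneg U1 U2 /\ continuous_nonneg U2.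

Definition solves_ode (alpha : Rbar) (mu sigma : R -> R) (r : R) (u : R -> R) : Prop :=
  forall x, inI alpha x ->
    ex_derive u x /\ ex_derive (Derive u) x /\
    / 2 * (sigma x) ^ 2 * Derive (Derive u) x + mu x * Derive u x - r * u x = 0.

Definition Dfun (psi phi : R -> R) (x m : R) : R :=
  Derive psi x * phi m - Derive phi x * psi m.
Definition Nfun (mu U : R -> R) (r : R) (psi phi : R -> R) (x m : R) : R :=
  phi x * psi m - psi x * phi m + Dfun psi phi x m * mu x / r
  - Dfun psi phi x x * U m.
Definition Gfun (mu : R -> R) (r x : R) : R := 1 - Derive mu x / r.

(* Main.v *)
Require Import Defs.
From Stdlib Require Import Reals Lra.
From Coquelicot Require Import Coquelicot.
Open Scope R_scope.
Lemma deriv_pos_sides f x l : derivable_pt_lim f x l -> 0 < l -> forall d, 0 < d ->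
  (exists y, x < y < x + d /\ f x < f y) /\ (exists y, x - d < y < x /\ f y < f x).
Proof.
intros H Hl d Hd.
destruct (H (l/2) ltac:(lra)) as [del Hdel].
pose (e := Rmin del d / 2).
assert (He : 0 < e) by (unfold e; pose proof (cond_pos del); apply Rmin_case; lra).
assert (He2 : e < del) by (unfold e; pose proof (cond_pos del); pose proof (Rmin_l del d); lra).
assert (He3 : e < d) by (unfold e; pose proof (cond_pos del); pose proof (Rmin_r del d); lra).
split.
- exists (x + e). split; [lra|].
  specialize (Hdel e ltac:(lra) ltac:(rewrite Rabs_pos_eq; lra)).
  apply Rabs_def2 in Hdel. destruct Hdel as [H1 H2].
  assert (Hq : 0 < (f (x + e) - f x) / e) by lra.
  assert (f (x+e) - f x = (f (x + e) - f x) / e * e) by (field; lra).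
  nra.
- exists (x - e). split; [lra|].
  specialize (Hdel (-e) ltac:(lra) ltac:(rewrite Rabs_left; lra)).
  apply Rabs_def2 in Hdel. destruct Hdel as [H1 H2].
  assert (Hq : 0 < (f (x + - e) - f x) / - e) by lra.
  assert (f (x + - e) - f x = (f (x + - e) - f x) / - e * - e) by (field; lra).
  replace (x - e) with (x + - e) by ring.
  nra.
Qed.

Lemma inI_left alpha x : inI alpha x -> exists d, 0 < d /\ forall y, x - d < y -> inI alpha y.
Proof.
unfold inI. destruct alpha as [a| |]; simpl; intros H.
- exists (x - a). split; [lra|]. intros; lra.
- contradiction.
- exists 1. split; [lra|]. auto.
Qed.

Lemma inI_right alpha x y : inI alpha x -> x <= y -> inI alpha y.
Proof. unfold inI. destruct alpha as [a| |]; simpl; intros; auto; lra. Qed.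

Lemma nonneg_to_lim f f' x : is_derive_nonneg f f' -> 0 < x -> derivable_pt_lim f x (f' x).
Proof.
intros H Hx eps Heps.
specialize (H x (Rlt_le _ _ Hx) (ball (f' x) eps)).
assert (Hb : locally (f' x) (ball (f' x) eps)).
{ exists (mkposreal eps Heps). auto. }
specialize (H Hb). destruct H as [del Hdel].
assert (Hm : 0 < Rmin del x) by (pose proof (cond_pos del); apply Rmin_case; lra).
exists (mkposreal _ Hm). simpl. intros h Hh Hh2.
assert (Hb1 : ball 0 del h).
{ change (Rabs (h - 0) < del). rewrite Rminus_0_r. pose proof (Rmin_l del x). lra. }
assert (Hp : h <> 0 /\ 0 <= x + h).
{ split; auto. pose proof (Rmin_r del x). apply Rabs_def2 in Hh2. lra. }
specialize (Hdel h Hb1 Hp). exact Hdel.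
Qed.

Lemma psi_deriv_pos alpha mu sigma r psi :
  0 < r -> (forall x, inI alpha x -> 0 < sigma x) ->
  solves_ode alpha mu sigma r psi -> (forall x, inI alpha x -> 0 < psi x) ->
  (forall x y, inI alpha x -> inI alpha y -> x < y -> psi x < psi y) ->
  forall x, inI alpha x -> 0 < Derive psi x.
Proof.
intros Hr Hs Hode Hpos Hinc.
assert (Hge : forall x, inI alpha x -> 0 <= Derive psi x).
{ intros x Hx. destruct (Rle_or_lt 0 (Derive psi x)) as [h|h]; auto. exfalso.
  destruct (Hode x Hx) as [Hd _].
  assert (Hl : derivable_pt_lim (fun y => - psi y) x (- Derive psi x)).
  { apply is_derive_Reals. apply (is_derive_opp psi). apply Derive_correct; auto. }
  destruct (deriv_pos_sides _ _ _ Hl ltac:(lra) 1 ltac:(lra)) as [[y [Hy1 Hy2]] _].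
  pose proof (Hinc x y Hx (inI_right alpha x y Hx ltac:(lra)) ltac:(lra)). lra. }
intros x Hx. destruct (Rle_lt_or_eq_dec 0 _ (Hge x Hx)) as [h|h]; auto. exfalso.
destruct (Hode x Hx) as [Hd [Hd2 He]].
rewrite <- h in He.
pose proof (Hs x Hx). pose proof (Hpos x Hx).
assert (Hpp : 0 < Derive (Derive psi) x).
{ assert (0 < sigma x ^ 2) by (apply pow_lt; lra).
  destruct (Rle_or_lt (Derive (Derive psi) x) 0) as [h2|h2]; auto.
  assert (sigma x ^ 2 * Derive (Derive psi) x <= 0) by (apply Rmult_le_0_l; lra).
  nra. }
assert (Hl : derivable_pt_lim (Derive psi) x (Derive (Derive psi) x)).
{ apply is_derive_Reals. apply Derive_correct; auto. }
destruct (inI_left _ _ Hx) as [d [Hd0 Hdl]].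
destruct (deriv_pos_sides _ _ _ Hl Hpp d Hd0) as [_ [y [Hy1 Hy2]]].
pose proof (Hge y (Hdl y ltac:(lra))). lra.
Qed.

Lemma phi_deriv_nonpos alpha mu sigma r phi :
  solves_ode alpha mu sigma r phi ->
  (forall x y, inI alpha x -> inI alpha y -> x < y -> phi y < phi x) ->
  forall x, inI alpha x -> Derive phi x <= 0.
Proof.
intros Hode Hdec x Hx. destruct (Rle_or_lt (Derive phi x) 0) as [h|h]; auto. exfalso.
destruct (Hode x Hx) as [Hd _].
assert (Hl : derivable_pt_lim phi x (Derive phi x)).
{ apply is_derive_Reals. apply Derive_correct; auto. }
destruct (deriv_pos_sides _ _ _ Hl h 1 ltac:(lra)) as [[y [Hy1 Hy2]] _].
pose proof (Hdec x y Hx (inI_right alpha x y Hx ltac:(lra)) ltac:(lra)). lra.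
Qed.
Lemma mle0l a b : 0 <= a -> b <= 0 -> a * b <= 0.
Proof. intros. pose proof (Rmult_le_compat_l a b 0 H H0). lra. Qed.
Lemma mle0r a b : a <= 0 -> 0 <= b -> a * b <= 0.
Proof. intros. rewrite Rmult_comm. apply mle0l; auto. Qed.
Lemma Num_neg a b a1 b1 a2 b2 u u1 u2 pm fm Um s r :
  0 < r -> 0 < s ->
  / 2 * s ^ 2 * a2 + u * a1 - r * a = 0 ->
  / 2 * s ^ 2 * b2 + u * b1 - r * b = 0 ->
  0 < 1 - u1 / r -> 0 < a1 * fm - b1 * pm ->
  0 <= b * pm - a * fm + (a1 * fm - b1 * pm) * u / r - (a1 * b - b1 * a) * Um ->
  u2 <= 0 -> b * pm - a * fm <= 0 ->
  let N := b * pm - a * fm + (a1 * fm - b1 * pm) * u / r - (a1 * b - b1 * a) * Um in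
  let G := 1 - u1 / r in let D := a1 * fm - b1 * pm in
  let N' := b1 * pm - a1 * fm + (a2 * fm - b2 * pm) * u / r + D * u1 / r - (a2 * b - b2 * a) * Um in
  let G' := - u2 / r in let D' := a2 * fm - b2 * pm in
  N' * (G * D) - N * (G' * D + G * D') < 0.
Proof.
intros Hr Hs Ea Eb HG HD HN Hu2 HF. intros.
assert (Hs2 : 0 < s ^ 2) by (apply pow_lt; lra).
assert (Ea' : a2 = 2 * (r * a - u * a1) / s ^ 2) by (apply (Rmult_eq_reg_l (/2 * s^2)); [field_simplify; lra | apply Rgt_not_eq; nra]).
assert (Eb' : b2 = 2 * (r * b - u * b1) / s ^ 2) by (apply (Rmult_eq_reg_l (/2 * s^2)); [field_simplify; lra | apply Rgt_not_eq; nra]).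
assert (Eq : N' * (G * D) - N * (G' * D + G * D') =
   G * (- G * D ^ 2) + G * (2 * r / s ^ 2) * N * (b * pm - a * fm) + N * (u2 / r) * D).
{ unfold N', N, G', D', G, D. rewrite Ea', Eb'. field. split; lra. }
rewrite Eq.
fold N in HN. fold G in HG. fold D in HD.
assert (T1 : G * (- G * D ^ 2) < 0).
{ assert (0 < G * (G * D ^ 2)) by (apply Rmult_lt_0_compat; auto; apply Rmult_lt_0_compat; auto; apply pow_lt; auto). nra. }
assert (T2 : G * (2 * r / s ^ 2) * N * (b * pm - a * fm) <= 0).
{ apply mle0l; auto. apply Rmult_le_pos; auto. apply Rmult_le_pos; [lra|].
  apply Rlt_le. apply Rdiv_lt_0_compat; lra. }
assert (T3 : N * (u2 / r) * D <= 0).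
{ assert (u2 / r <= 0). { unfold Rdiv. apply mle0r; auto. apply Rlt_le, Rinv_0_lt_compat; auto. }
  assert (N * (u2 / r) <= 0) by (apply mle0l; auto). apply mle0r; lra. }
lra.
Qed.
Lemma Q_deriv mu U r psi phi x m :
  0 < r -> ex_derive psi x -> ex_derive phi x -> ex_derive (Derive psi) x ->
  ex_derive (Derive phi) x -> ex_derive mu x -> ex_derive (Derive mu) x ->
  Gfun mu r x <> 0 -> Dfun psi phi x m <> 0 ->
  let a := psi x in let b := phi x in let a1 := Derive psi x in let b1 := Derive phi x in
  let a2 := Derive (Derive psi) x in let b2 := Derive (Derive phi) x in
  let u := mu x in let u1 := Derive mu x in let u2 := Derive (Derive mu) x in
  let pm := psi m in let fm := phi m in
  let N := Nfun mu U r psi phi x m in let G := Gfun mu r x in let D := Dfun psi phi x m in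
  let N' := b1 * pm - a1 * fm + (a2 * fm - b2 * pm) * u / r + D * u1 / r - (a2 * b - b2 * a) * U m in
  let G' := - u2 / r in let D' := a2 * fm - b2 * pm in
  is_derive (fun y => Nfun mu U r psi phi y m / (Gfun mu r y * Dfun psi phi y m)) x
    ((N' * (G * D) - N * (G' * D + G * D')) / (G * D) ^ 2).
Proof.
intros Hr Ha Hb Ha1 Hb1 Hu Hu1 HG HD. intros.
unfold Nfun, Gfun, Dfun in *.
auto_derive.
- repeat split; auto.
- change (fun x0 : R => phi x0) with phi. change (fun x0 : R => psi x0) with psi.
  change (fun x0 : R => mu x0) with mu.
  change (fun x0 : R => Derive psi x0) with (Derive psi).
  change (fun x0 : R => Derive phi x0) with (Derive phi).
  change (fun x0 : R => Derive mu x0) with (Derive mu).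
  unfold N', G', D', N, G, D, a, b, a1, b1, a2, b2, u, u1, u2, pm, fm.
  match goal with |- ?A = ?B => change (@eq R A B) end. field. all: repeat split; try lra; auto. all: intro h; apply HG; replace (Derive mu x) with r by lra; field; lra.
Qed.

Definition Qd mu U r psi phi (m x : R) : R :=
  let a := psi x in let b := phi x in let a1 := Derive psi x in let b1 := Derive phi x in
  let a2 := Derive (Derive psi) x in let b2 := Derive (Derive phi) x in
  let u := mu x in let u1 := Derive mu x in let u2 := Derive (Derive mu) x in
  let pm := psi m in let fm := phi m in
  let N := Nfun mu U r psi phi x m in let G := Gfun mu r x in let D := Dfun psi phi x m in
  let N' := b1 * pm - a1 * fm + (a2 * fm - b2 * pm) * u / r + D * u1 / r - (a2 * b - b2 * a) * U m in
  let G' := - u2 / r in let D' := a2 * fm - b2 * pm in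
  (N' * (G * D) - N * (G' * D + G * D')) / (G * D) ^ 2.

Lemma Qd_neg mu U r psi phi m x s :
  0 < r -> 0 < s ->
  / 2 * s ^ 2 * Derive (Derive psi) x + mu x * Derive psi x - r * psi x = 0 ->
  / 2 * s ^ 2 * Derive (Derive phi) x + mu x * Derive phi x - r * phi x = 0 ->
  0 < Gfun mu r x -> 0 < Dfun psi phi x m -> 0 <= Nfun mu U r psi phi x m ->
  Derive (Derive mu) x <= 0 -> phi x * psi m - psi x * phi m <= 0 ->
  Qd mu U r psi phi m x < 0.
Proof.
intros Hr Hs Ea Eb HG HD HN Hu2 HF.
unfold Nfun, Dfun, Gfun in HN, HG, HD.
pose proof (Num_neg (psi x) (phi x) (Derive psi x) (Derive phi x) (Derive (Derive psi) x)
  (Derive (Derive phi) x) (mu x) (Derive mu x) (Derive (Derive mu) x) (psi m) (phi m) (U m) s r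
  Hr Hs Ea Eb HG HD HN Hu2 HF) as Hn.
unfold Qd. cbv zeta in Hn |- *.
unfold Gfun, Dfun, Nfun in *.
apply Rdiv_neg_pos.
- exact Hn.
- apply pow_lt. apply Rmult_lt_0_compat; auto.
Qed.

Lemma Q_deriv' mu U r psi phi x m :
  0 < r -> ex_derive psi x -> ex_derive phi x -> ex_derive (Derive psi) x ->
  ex_derive (Derive phi) x -> ex_derive mu x -> ex_derive (Derive mu) x ->
  Gfun mu r x <> 0 -> Dfun psi phi x m <> 0 ->
  derivable_pt_lim (fun y => Nfun mu U r psi phi y m / (Gfun mu r y * Dfun psi phi y m)) x
    (Qd mu U r psi phi m x).
Proof.
intros. apply is_derive_Reals. exact (Q_deriv mu U r psi phi x m H H0 H1 H2 H3 H4 H5 H6 H7).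
Qed.

Lemma div_lt a b c d : 0 < b -> 0 < d -> a * d < c * b -> a / b < c / d.
Proof.
intros Hb Hd H.
replace (a / b) with ((a * d) * / (b * d)) by (field; lra).
replace (c / d) with ((c * b) * / (b * d)) by (field; lra).
apply Rmult_lt_compat_r; auto. apply Rinv_0_lt_compat. nra.
Qed.
Theorem lemma4
  (alpha : Rbar) (mu sigma : R -> R) (r : R) (U : R -> R)
  (psi phi : R -> R) (xbar : R) (eta : R -> R)
  (* standing assumptions *)
  (Halpha : Rbar_lt alpha 0)
  (Hmu_lip : lipschitz_on (inI alpha) mu)
  (Hsig_lip : lipschitz_on (inI alpha) sigma)
  (Hsig_pos : forall x, inI alpha x -> 0 < sigma x)
  (Hnat_left : natural_left alpha mu sigma)
  (Hnat_right : natural_right mu sigma)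
  (Hr : 0 < r)
  (HU_nonneg : forall x, 0 <= x -> 0 <= U x)
  (* (a) *)
  (Hmu_C1 : forall x, inI alpha x -> ex_derive mu x)
  (Hmu'_lip : lipschitz_on (inI alpha) (Derive mu))
  (Hsig_C1 : forall x, inI alpha x -> ex_derive sigma x)
  (Hsig'_lip : lipschitz_on (inI alpha) (Derive sigma))
  (Hmu0 : mu 0 > r * U 0)
  (Hsup : exists c, c < r /\ forall x, 0 <= x -> Derive mu x <= c)
  (* (b) *)
  (HU_mono : forall x y, 0 <= x -> x <= y -> U x <= U y)
  (HU_conc : forall x y t, 0 <= x -> 0 <= y -> 0 <= t <= 1 ->
      t * U x + (1 - t) * U y <= U (t * x + (1 - t) * y))
  (HU_C2 : exists U1 U2 : R -> R, C2_nonneg U U1 U2 /\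
      exists ustar, 0 <= ustar /\
        (forall x, 0 <= x <= ustar -> 1 <= U1 x) /\
        (forall x, ustar <= x -> U1 x = 1) /\
        (forall x, 0 <= x < ustar ->
           mu x * U1 x + / 2 * (sigma x) ^ 2 * U2 x - r * U x > 0))
  (* (c) *)
  (Hmu_C2 : forall x, 0 <= x ->
      ex_derive (Derive mu) x /\ Derive (Derive mu) x <= 0)
  (* psi, phi: positive increasing / decreasing solutions of the ODE *)
  (Hpsi_ode : solves_ode alpha mu sigma r psi)
  (Hpsi_pos : forall x, inI alpha x -> 0 < psi x)
  (Hpsi_inc : forall x y, inI alpha x -> inI alpha y -> x < y -> psi x < psi y)
  (Hphi_ode : solves_ode alpha mu sigma r phi)
  (Hphi_pos : forall x, inI alpha x -> 0 < phi x)
  (Hphi_dec : forall x y, inI alpha x -> inI alpha y -> x < y -> phi y < phi x)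
  (* xbar *)
  (Hxbar_pos : 0 < xbar)
  (Hxbar_l : forall x, 0 <= x < xbar -> mu x - r * U x > 0)
  (Hxbar_r : forall x, xbar < x -> mu x - r * U x < 0)
  (* eta (known facts from the context) *)
  (Heta : forall m, 0 <= m <= xbar ->
      0 <= eta m /\ m <= eta m /\
      Nfun mu U r psi phi (eta m) m = 0 /\
      (forall x, 0 <= x -> Nfun mu U r psi phi x m = 0 -> x = eta m) /\
      (forall x, 0 <= x < eta m -> Nfun mu U r psi phi x m > 0) /\
      (forall x, eta m < x -> Nfun mu U r psi phi x m < 0)) :
  (* (i) *)
  (forall m1 m2, 0 < m1 -> m1 < m2 -> m2 <= xbar ->
     Nfun mu U r psi phi m2 m2 / (Gfun mu r m2 * Dfun psi phi m2 m2)
     < Nfun mu U r psi phi m1 m1 / (Gfun mu r m1 * Dfun psi phi m1 m1)) /\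
  (* (ii) *)
  (forall m, 0 < m <= xbar ->
     forall x1 x2, m <= x1 -> x1 < x2 -> x2 <= eta m ->
     Nfun mu U r psi phi x2 m / (Gfun mu r x2 * Dfun psi phi x2 m)
     < Nfun mu U r psi phi x1 m / (Gfun mu r x1 * Dfun psi phi x1 m)).

Proof.
destruct Hsup as [c0 [Hc0 Hc0']].
assert (HI : forall x, 0 <= x -> inI alpha x).
{ intros x Hx. unfold inI. destruct alpha as [a| |]; simpl in *; auto; lra. }
assert (HG : forall x, 0 <= x -> 0 < Gfun mu r x).
{ intros x Hx. unfold Gfun. pose proof (Hc0' x Hx).
  replace (1 - Derive mu x / r) with ((r - Derive mu x) / r) by (field; lra).
  apply Rdiv_lt_0_compat; lra. }
assert (Hpsi' : forall x, inI alpha x -> 0 < Derive psi x)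
  by (apply (psi_deriv_pos alpha mu sigma r psi); auto).
assert (Hphi' : forall x, inI alpha x -> Derive phi x <= 0)
  by (apply (phi_deriv_nonpos alpha mu sigma r phi); auto).
assert (HD : forall x m, 0 <= x -> 0 <= m -> 0 < Dfun psi phi x m).
{ intros x m Hx Hm. unfold Dfun.
  pose proof (Hpsi' x (HI x Hx)). pose proof (Hphi' x (HI x Hx)).
  pose proof (Hphi_pos m (HI m Hm)). pose proof (Hpsi_pos m (HI m Hm)). nra. }
split.
-
  intros m1 m2 H1 H12 H2.
  assert (Eq : forall m, 0 < m -> Nfun mu U r psi phi m m / (Gfun mu r m * Dfun psi phi m m)
                 = (mu m / r - U m) / Gfun mu r m).
  { intros m Hm. pose proof (HG m ltac:(lra)). pose proof (HD m m ltac:(lra) ltac:(lra)).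
    unfold Nfun. field. lra. }
  rewrite (Eq m1 H1), (Eq m2 ltac:(lra)).
  destruct HU_C2 as [U1 [U2 [[HdU _] [ustar [Hus [HU1a [HU1b _]]]]]]].
  assert (HU1 : forall x, 0 <= x -> 1 <= U1 x).
  { intros x Hx. destruct (Rle_or_lt x ustar). apply HU1a; lra. rewrite HU1b; lra. }
  destruct (MVT_cor2 U U1 m1 m2 H12) as [c1 [Ec1 Hc1]].
  { intros c Hc. apply nonneg_to_lim; auto. lra. }
  destruct (MVT_cor2 mu (Derive mu) m1 m2 H12) as [c2 [Ec2 Hc2]].
  { intros c Hc. apply is_derive_Reals. apply Derive_correct. apply Hmu_C1, HI. lra. }
  destruct (MVT_cor2 (Derive mu) (Derive (Derive mu)) m1 m2 H12) as [c3 [Ec3 Hc3]].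
  { intros c Hc. apply is_derive_Reals. apply Derive_correct. apply Hmu_C2. lra. }
  pose proof (HU1 c1 ltac:(lra)). pose proof (Hc0' c2 ltac:(lra)).
  pose proof (proj2 (Hmu_C2 c3 ltac:(lra))).
  assert (HA1 : 0 < mu m1 / r - U m1).
  { pose proof (Hxbar_l m1 ltac:(lra)).
    replace (mu m1 / r - U m1) with ((mu m1 - r * U m1) / r) by (field; lra).
    apply Rdiv_lt_0_compat; lra. }
  assert (Hmu12 : mu m2 - mu m1 < r * (U m2 - U m1)).
  { rewrite Ec1, Ec2. assert (Hd : 0 < m2 - m1) by lra.
    assert (Derive mu c2 * (m2 - m1) <= c0 * (m2 - m1)) by (apply Rmult_le_compat_r; lra).
    assert (c0 * (m2 - m1) < r * (m2 - m1)) by (apply Rmult_lt_compat_r; lra).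
    assert (r * (m2 - m1) <= r * (U1 c1 * (m2 - m1))).
    { apply Rmult_le_compat_l; [lra|]. pose proof (Rmult_le_compat_r (m2 - m1) 1 (U1 c1) ltac:(lra) ltac:(lra)). lra. }
    lra. }
  assert (HA : mu m2 / r - U m2 < mu m1 / r - U m1).
  { assert ((mu m2 - mu m1) / r < U m2 - U m1).
    { apply (Rmult_lt_reg_r r); auto. unfold Rdiv. rewrite Rmult_assoc, Rinv_l by lra. lra. }
    unfold Rdiv in *. lra. }
  assert (HGG : Gfun mu r m1 <= Gfun mu r m2).
  { unfold Gfun. assert (Derive mu m2 <= Derive mu m1) by nra.
    unfold Rdiv. assert (Derive mu m2 * / r <= Derive mu m1 * / r).
    { apply Rmult_le_compat_r; auto. apply Rlt_le, Rinv_0_lt_compat; auto. } lra. }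
  pose proof (HG m1 ltac:(lra)). pose proof (HG m2 ltac:(lra)).
  apply div_lt; auto.
  destruct (Rle_or_lt 0 (mu m2 / r - U m2)); nra.
-
  intros m [Hm0 Hmx] x1 x2 Hx1 H12 Hx2.
  destruct (Heta m ltac:(lra)) as [He0 [Hme [HNe [_ [Hpos Hneg]]]]].
  destruct (MVT_cor2 (fun y => Nfun mu U r psi phi y m / (Gfun mu r y * Dfun psi phi y m)) (Qd mu U r psi phi m) x1 x2 H12) as [c [Ec Hc]].
  { intros c Hc. assert (Hcc : 0 <= c) by lra.
    destruct (Hpsi_ode c (HI c Hcc)) as [? [? _]].
    destruct (Hphi_ode c (HI c Hcc)) as [? [? _]].
    apply Q_deriv'; auto.
    - apply Hmu_C2; auto.
    - apply Rgt_not_eq, HG; auto.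
    - apply Rgt_not_eq, HD; lra. }
  assert (Hq : Qd mu U r psi phi m c < 0).
  { assert (Hcc : 0 <= c) by lra.
    destruct (Hpsi_ode c (HI c Hcc)) as [? [? Ea]].
    destruct (Hphi_ode c (HI c Hcc)) as [? [? Eb]].
    refine (Qd_neg mu U r psi phi m c (sigma c) Hr _ Ea Eb _ _ _ _ _).
    - apply Hsig_pos, HI; auto.
    - apply HG; auto.
    - apply HD; lra.
    - destruct (Rle_lt_or_eq_dec c (eta m) ltac:(lra)) as [h|h].
      + apply Rlt_le, Hpos. lra.
      + rewrite h, HNe. lra.
    - apply Hmu_C2; auto.
    - destruct (Rle_lt_or_eq_dec m c ltac:(lra)) as [h|h].
      + pose proof (Hpsi_inc m c (HI m ltac:(lra)) (HI c Hcc) h).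
        pose proof (Hphi_dec m c (HI m ltac:(lra)) (HI c Hcc) h).
        pose proof (Hphi_pos m (HI m ltac:(lra))). pose proof (Hpsi_pos m (HI m ltac:(lra))).
        pose proof (Hphi_pos c (HI c Hcc)). pose proof (Hpsi_pos c (HI c Hcc)). nra.
      + subst c. lra. }
  assert (Qd mu U r psi phi m c * (x2 - x1) < 0).
  { assert (0 < x2 - x1) by lra. nra. }
  lra.
Qed.
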